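(* Let $M=(S,\Sigma,\delta,s_0,F)$ be a deterministic finite automaton, let $T\ge 1$ be an integer, and for each $s\in S$ let $P(\cdot\mid s)$ and $Q(\cdot\mid s)$ be probability distributions on $\Sigma$. Define probability distributions $P$ and $Q$ on $\Sigma^T$ by $P(x)=\prod_{t=1}^T P(\sigma_t\mid s_t)$ and $Q(x)=\prod_{t=1}^T Q(\sigma_t\mid s_t)$ for $x=\sigma_1\cdots\sigma_T$, where $s_1\cdots s_{T+1}$ is the state sequence induced by $x$. Let $f^*:\Sigma^T\to\{0,1\}$ be $f^*(x)=\mathbb{1}(s_{T+1}\in F)$, and let $\hat f:\Sigma^T\to\{0,1\}$ be any function. Let $\epsilon=\max_{s\in S}\mathrm{TV}(P(\sigma\mid s),Q(\sigma\mid s))$. Then $$L_Q(\hat f)\le L_P(\hat f)+2T|S|^{T+1}\epsilon.$$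
   Context: A deterministic finite automaton $M=(S,\Sigma,\delta,s_0,F)$ has a finite state set $S$, a finite alphabet $\Sigma$, a transition function $\delta:S\times\Sigma\to S$, an initial state $s_0\in S$ and a set of final states $F\subseteq S$. For a string $x=\sigma_1\cdots\sigma_T$, the induced state sequence $s_1\cdots s_{T+1}$ is given by $s_1=s_0$ and $s_{t+1}=\delta(s_t,\sigma_t)$. For a distribution $D$ on $\Sigma^T$, $L_D(\hat f)=\mathbb{P}_{x\sim D}[\hat f(x)\neq f^*(x)]$. The total variation distance between discrete distributions is defined without the factor $1/2$: $\mathrm{TV}(\mu,\nu)=\sum_a|\mu(a)-\nu(a)|$. *)

(* Defs.v *)
From mathcomp Require Import all_boot all_order all_algebra.
Set Implicit Arguments. Unset Strict Implicit. Unset Printing Implicit Defensive.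
Import Order.TTheory GRing.Theory Num.Theory.
Local Open Scope ring_scope.

Section DFA.
Variables (S Sigma : finType) (delta : S -> Sigma -> S) (s0 : S).

Definition dfa_run (w : seq Sigma) : S := foldl delta s0 w.

(* For x = sigma_1 ... sigma_T and 0-indexed t < T, the state s_{t+1}
   (1-indexed in the paper) is dfa_run (take t x): the state in which
   letter sigma_{t+1} = tnth x t is read. *)
Definition seq_prob (T : nat) (R : numDomainType) (Pc : S -> Sigma -> R)
  (x : T.-tuple Sigma) : R :=
  \prod_(t < T) Pc (dfa_run (take t x)) (tnth x t).

Definition fstar (T : nat) (F : {set S}) (x : T.-tuple Sigma) : bool :=
  dfa_run x \in F.
End DFA.

Definition loss (Sigma : finType) (T : nat) (R : numDomainType)
  (D : T.-tuple Sigma -> R) (fhat f : T.-tuple Sigma -> bool) : R :=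
  \sum_(x : T.-tuple Sigma | fhat x != f x) D x.

(* total variation without the factor 1/2 *)
Definition TV (Sigma : finType) (R : numDomainType) (mu nu : Sigma -> R) : R :=
  \sum_(a : Sigma) `|mu a - nu a|.

Definition is_distr (Sigma : finType) (R : numDomainType) (mu : Sigma -> R) : Prop :=
  (forall a, 0 <= mu a) /\ \sum_(a : Sigma) mu a = 1.

(* Main.v *)
Require Import Defs.
From mathcomp Require Import all_boot all_order all_algebra.
From mathcomp Require Import ring.
Import Order.TTheory GRing.Theory Num.Theory.
Local Open Scope ring_scope.

Section Aux.
Variables (R : realFieldType) (S Sigma : finType) (delta : S -> Sigma -> S).

Fixpoint pr (P : S -> Sigma -> R) (s : S) (w : seq Sigma) : R :=
  match w with [::] => 1 | a :: w' => P s a * pr P (delta s a) w' end.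



Lemma pr_prod (P : S -> Sigma -> R) (w : seq Sigma) s (x0 : Sigma) :
  \prod_(t < size w) P (foldl delta s (take t w)) (nth x0 w t) = pr P s w.
Proof.
elim: w s => [|a w IH] s /=; first by rewrite big_ord0.
by rewrite big_ord_recl /= IH.
Qed.

Lemma seq_prob_pr (T : nat) (P : S -> Sigma -> R) s (x : T.-tuple Sigma) :
  seq_prob delta s P x = pr P s x.
Proof.
rewrite /seq_prob; case: T x => [|n] x.
  by rewrite tuple0 big_ord0.
rewrite -(pr_prod _ _ _ (thead x)) size_tuple.
by apply: eq_bigr => t _; rewrite (tnth_nth (thead x)).
Qed.

Lemma sum_tupleS (n : nat) (f : n.+1.-tuple Sigma -> R) :
  \sum_(x : n.+1.-tuple Sigma) f x =
  \sum_(a : Sigma) \sum_(x : n.-tuple Sigma) f [tuple of a :: x].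
Proof.
rewrite pair_big /=.
rewrite (reindex (fun p : Sigma * n.-tuple Sigma => [tuple of p.1 :: p.2])) //=.
exists (fun x : n.+1.-tuple Sigma => (thead x, [tuple of behead x])).
  by move=> [a x] _ /=; congr pair; apply: val_inj.
move=> x _; apply: val_inj => /=.
by case: x => [[|a w]] //=.
Qed.

Variables (P Q : S -> Sigma -> R) (eps : R).
Hypothesis hP : forall s, is_distr (P s).
Hypothesis hQ : forall s, is_distr (Q s).
Hypothesis heps : forall s, TV (P s) (Q s) <= eps.

Lemma pr_ge0 D (hD : forall s, is_distr (D s)) s w : 0 <= pr D s w.
Proof.
elim: w s => [|a w IH] s /=; first by [].
by rewrite mulr_ge0 //; case: (hD s).
Qed.

Lemma pr_sum1 D (hD : forall s, is_distr (D s)) n s :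
  \sum_(x : n.-tuple Sigma) pr D s x = 1.
Proof.
elim: n s => [|n IH] s.
  by rewrite (big_pred1 [tuple]) // => x; apply/esym/eqP; exact: tuple0.
rewrite sum_tupleS /=.
under eq_bigr => a _ do rewrite -mulr_sumr IH mulr1.
by case: (hD s).
Qed.

Lemma tv_bound n s :
  \sum_(x : n.-tuple Sigma) `|pr P s x - pr Q s x| <= n%:R * eps.
Proof.
elim: n s => [|n IH] s.
  rewrite (big_pred1 [tuple]) /=; last by move=> x; apply/esym/eqP; exact: tuple0.
  by rewrite subrr normr0 mul0r.
rewrite sum_tupleS /=.
apply: (@le_trans _ _ (\sum_a (`|P s a - Q s a| *
    \sum_(x : n.-tuple Sigma) pr P (delta s a) x +
    Q s a * \sum_(x : n.-tuple Sigma) `|pr P (delta s a) x - pr Q (delta s a) x|))).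
  apply: ler_sum => a _; rewrite mulr_sumr mulr_sumr -big_split /=.
  apply: ler_sum => x _.
  have -> : P s a * pr P (delta s a) x - Q s a * pr Q (delta s a) x =
    (P s a - Q s a) * pr P (delta s a) x +
    Q s a * (pr P (delta s a) x - pr Q (delta s a) x) by ring.
  apply: (le_trans (ler_normD _ _)).
  rewrite !normrM (ger0_norm (@pr_ge0 P hP _ _)).
  by rewrite (ger0_norm (proj1 (hQ s) a)).
rewrite big_split /=.
under eq_bigr => a _ do rewrite pr_sum1 // mulr1.
rewrite mulrSr mulrDl mul1r addrC.
apply: lerD; last exact: heps.
apply: (@le_trans _ _ (\sum_a Q s a * (n%:R * eps))).
  apply: ler_sum => a _; apply: ler_wpM2l; first by case: (hQ s).
  exact: IH.
by rewrite -mulr_suml; case: (hQ s) => _ ->; rewrite mul1r.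
Qed.

End Aux.
Arguments pr {R S Sigma}.

Theorem theorem4p3 (R : realFieldType) (S Sigma : finType)
  (delta : S -> Sigma -> S) (s0 : S) (F : {set S}) (T : nat) (hT : (1 <= T)%N)
  (P Q : S -> Sigma -> R)
  (hP : forall s, is_distr (P s)) (hQ : forall s, is_distr (Q s))
  (fhat : T.-tuple Sigma -> bool) :
  let eps := \big[Num.max/0]_(s : S) TV (P s) (Q s) in
  loss (seq_prob delta s0 Q) fhat (fstar delta s0 F)
  <= loss (seq_prob delta s0 P) fhat (fstar delta s0 F)
     + (2 * T * #|S| ^ T.+1)%:R * eps.
Proof.
cbv zeta; set eps := (\big[Num.max/0]_(s : S) TV (P s) (Q s)).
have heps : forall s, TV (P s) (Q s) <= eps by move=> s; exact: le_bigmax.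
have TVge0 : forall s, 0 <= TV (P s) (Q s).
  by move=> s; rewrite /TV; apply: sumr_ge0 => a _.
have eps0 : 0 <= eps := le_trans (TVge0 s0) (heps s0).
rewrite /loss.
apply: (@le_trans _ _ (\sum_(x : T.-tuple Sigma | fhat x != fstar delta s0 F x)
   seq_prob delta s0 P x + \sum_(x : T.-tuple Sigma)
   `|pr delta P s0 x - pr delta Q s0 x|)).
  apply: (@le_trans _ _ (\sum_(x : T.-tuple Sigma | fhat x != fstar delta s0 F x)
     (seq_prob delta s0 P x + `|pr delta P s0 x - pr delta Q s0 x|))).
    apply: ler_sum => x _; rewrite !seq_prob_pr.
    rewrite -lerBlDl distrC; exact: ler_norm.
  rewrite big_split /=; apply: lerD => //.
  rewrite [X in _ <= X](bigID (fun x => fhat x != fstar delta s0 F x)) /=.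
  by rewrite lerDl; apply: sumr_ge0.
apply: lerD => //.
apply: (le_trans (@tv_bound R S Sigma delta P Q eps hP hQ heps T s0)).
apply: ler_wpM2r => //; rewrite ler_nat.
have hS : (0 < #|S|)%N by apply/card_gt0P; exists s0.
have h2 : (0 < #|S| ^ T.+1)%N by rewrite expn_gt0 hS.
rewrite mulnC mulnA; apply: leq_pmull.
by rewrite muln_gt0 h2.
Qed.
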